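(* Let $n\in\mathbb{N}$ and let $(\Pi_1,\Pi_2,\dots,\Pi_n)$ be a uniformly random permutation of $(1,2,\dots,n)$. Then for all $r\ge1$, $$\Pr\Big[\big|\{i\in\{1,\dots,\lfloor n/2\rfloor\}:|\Pi_{2i-1}-\Pi_{2i}|\le r/12\}\big|\ge r\Big]\le 2^{-r}.$$ *)

(* Defs.v *)
From HB Require Import structures.
From mathcomp Require Import all_boot all_order all_algebra all_fingroup.
From mathcomp Require Import all_classical all_reals all_analysis.
Set Implicit Arguments. Unset Strict Implicit. Unset Printing Implicit Defensive.
Import Order.TTheory GRing.Theory Num.Theory.
Local Open Scope ring_scope.

(* Value of the permutation at (0-based) position k, as a natural number;
   positions k >= n are never used. The paper's values 1..n are shifted to
   0..n-1, which does not affect differences. *)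
Definition permval (n : nat) (s : 'S_n) (k : nat) : nat :=
  match @insub nat (fun k => k < n)%N 'I_n k with
  | Some i => nat_of_ord (s i)
  | None => 0%N
  end.

(* |{ i in {1..floor(n/2)} : |Pi_{2i-1} - Pi_{2i}| <= r/12 }|;
   paper index i corresponds to j = i-1 : 'I_(n./2), positions 2j, 2j+1 (0-based). *)
Definition close_pairs (R : realType) (n : nat) (s : 'S_n) (r : R) : nat :=
  #|[pred j : 'I_(n./2) |
      `|((permval s (2 * j)%N)%:R - (permval s (2 * j).+1)%:R : R)| <= r / 12%:R]|.

Definition close_prob (R : realType) (n : nat) (r : R) : R :=
  (#|[pred s : 'S_n | r <= (close_pairs s r)%:R]|)%:R / (#|{perm 'I_n}|)%:R.

(* Main.v *)
Require Import Defs.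
From HB Require Import structures.
From mathcomp Require Import all_boot all_order all_algebra all_fingroup.
From mathcomp Require Import all_classical all_reals all_analysis.
From mathcomp Require Import ring lra zify.
Import Order.TTheory GRing.Theory Num.Theory.
Local Open Scope ring_scope.
Set Implicit Arguments. Unset Strict Implicit. Unset Printing Implicit Defensive.

Lemma e_le3 (R : realType) : expR (1 : R) <= 3.
Proof.
have h6 : expR (1:R) = expR (6^-1) ^+ 6.
  by rewrite -expRM_natl divff.
have hN : (5/6 : R) <= expR (- 6^-1).
  by apply: le_trans (expR_ge1Dx _); lra.
have h1 : expR ((6:R)^-1) <= 6/5.
  have := expRxMexpNx_1 (6^-1 : R).
  have := expR_gt0 (6^-1 : R).
  nra.
rewrite h6; apply: le_trans (_ : (6/5 : R) ^+ 6 <= 3).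
  by apply: lerXn2r; rewrite ?nnegrE ?expR_ge0 //; lra.
rewrite !exprS expr0; lra.
Qed.
Lemma kk3 (R : realType) (k : nat) : (k.+1 ^ k <= 3 * k ^ k)%N.
Proof.
case: k => [|k] //.
set K := k.+1.
have hK : (0 : R) < K%:R by rewrite ltr0n.
have key : (K.+1%:R : R) ^+ K <= 3 * K%:R ^+ K.
  have -> : (K.+1%:R : R) = K%:R * (1 + K%:R^-1).
    by rewrite mulrDr mulr1 divff ?gt_eqF // -natr1 addrC.
  rewrite exprMn mulrC ler_pM2r ?exprn_gt0 //.
  apply: le_trans (e_le3 R).
  apply: (le_trans _ (_ : expR (K%:R^-1) ^+ K <= expR 1)); last first.
    by rewrite -expRM_natl divff ?gt_eqF.
  apply: lerXn2r; rewrite ?nnegrE ?expR_ge0 ?expR_ge1Dx //.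

by rewrite -(ler_nat R) natrM !natrX.
Qed.

Lemma kfact (R : realType) (k : nat) : (k ^ k <= 3 ^ k * k`!)%N.
Proof.
elim: k => [|k IH] //.
rewrite expnS factS expnS.
have h := kk3 R k.
apply: (leq_trans (_ : _ <= k.+1 * (3 * k ^ k))%N).
  by rewrite leq_mul2l h orbT.
apply: (leq_trans (_ : _ <= k.+1 * (3 * (3 ^ k * k`!)))%N).
  by rewrite leq_mul2l leq_mul2l IH !orbT.
rewrite eq_leq //; ring.
Qed.

Lemma final_nat (R : realType) (k d : nat) : (12 * d <= k)%N -> (2 ^ k * (2 * d) ^ k <= k`!)%N.
Proof.
move=> hd.
rewrite -(@leq_pmul2l (3 ^ k)) ?expn_gt0 //.
apply: leq_trans (kfact R k).
rewrite -!expnMn.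
case: k hd => [|k] hd //; rewrite leq_exp2r //.
by rewrite mulnA mulnA (_ : (3 * 2 * 2 = 12)%N).
Qed.
Lemma fstp_lt (n : nat) (j : 'I_(n./2)) : (2 * j < n)%N.
Proof. have := ltn_ord j; rewrite geq_half_double -mul2n => h. lia. Qed.
Lemma sndp_lt (n : nat) (j : 'I_(n./2)) : ((2 * j).+1 < n)%N.
Proof. have := ltn_ord j; rewrite geq_half_double -mul2n => h. lia. Qed.
Definition fstp (n : nat) (j : 'I_(n./2)) : 'I_n := Ordinal (@fstp_lt n j).
Definition sndp (n : nat) (j : 'I_(n./2)) : 'I_n := Ordinal (@sndp_lt n j).

Definition cl (R : realType) (n : nat) (r : R) (s : 'S_n) (j : 'I_(n./2)) : bool :=
  `|((s (fstp j))%:R - (s (sndp j))%:R : R)| <= r / 12%:R.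

Lemma permval_ord (n : nat) (s : 'S_n) (i : 'I_n) : permval s i = s i.
Proof.
by rewrite /permval insubT /= => [|h]; [exact: ltn_ord | congr (s _); apply: val_inj].
Qed.

Lemma close_pairsE (R : realType) (n : nat) (s : 'S_n) (r : R) :
  close_pairs s r = #|[set j | cl r s j]|.
Proof.
rewrite /close_pairs cardsE; apply: eq_card => j; rewrite !inE /cl.
have -> : permval s (2 * j) = s (fstp j) by exact: (permval_ord s (fstp j)).
by have -> : permval s (2 * j).+1 = s (sndp j) by exact: (permval_ord s (sndp j)).
Qed.
Lemma nat_close (R : realType) (r : R) (a v : nat) : 0 <= r ->
  `|(a%:R - v%:R : R)| <= r / 12%:R ->
  (a - v <= Num.truncn (r / 12%:R))%N /\ (v - a <= Num.truncn (r / 12%:R))%N.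
Proof.
move=> hr h.
have h0 : 0 <= r / 12%:R by rewrite divr_ge0.
case: (leqP v a) => hva.
  have -> : (v - a = 0)%N by apply/eqP; rewrite subn_eq0.
  split; last exact: leq0n.
  rewrite truncn_ge_nat //.
  by move: h; rewrite -natrB // normr_nat.
have -> : (a - v = 0)%N by apply/eqP; rewrite subn_eq0 ltnW.
split; first exact: leq0n.
rewrite truncn_ge_nat //.
by move: h; rewrite distrC -natrB ?normr_nat // ltnW.
Qed.
Definition dd (R : realType) (r : R) : nat := Num.truncn (r / 12%:R).
Definition near (R : realType) (r : R) (a b : nat) : bool := `|(a%:R - b%:R : R)| <= r / 12%:R.

Lemma count_close (R : realType) (n : nat) (r : R) (s : 'S_n) (a0 : 'I_n) (U : {set 'I_n}) :
  0 <= r -> a0 \notin U ->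
  (#|[set q in U | near r (s a0) (s q)]| <= 2 * dd r)%N.
Proof.
move=> hr ha0.
set d := dd r; set X := [set q in U | _].
set a := nat_of_ord (s a0).
rewrite cardE -(size_map (fun q => nat_of_ord (s q))).
pose s2 := [seq (a - i.+1)%N | i <- iota 0 d] ++ [seq (a + i.+1)%N | i <- iota 0 d].
have -> : (2 * d = size s2)%N by rewrite size_cat !size_map size_iota addnn mul2n.
apply: uniq_leq_size.
  rewrite map_inj_uniq ?enum_uniq // => x y /val_inj; exact: perm_inj.
move=> v /mapP [q]; rewrite mem_enum inE => /andP [hqU hq] ->.
have hne : nat_of_ord (s q) != a.
  apply/negP => /eqP /val_inj /perm_inj hq0; move: hqU; rewrite hq0.
  by rewrite (negbTE ha0).
have [h1 h2] := nat_close hr hq.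
rewrite -/(dd r) -/d -/a in h1 h2.
rewrite mem_cat; apply/orP.
case: (ltnP (s q) a) => hlt.
  left; apply/mapP; exists (a - (s q)).-1; first by rewrite mem_iota; lia.
  lia.
right; apply/mapP; exists ((s q) - a).-1; first by rewrite mem_iota; lia.
move: hne; rewrite neq_ltn ltnNge hlt /=; lia.
Qed.
Definition AA (R : realType) (n : nat) (r : R) (js : seq 'I_(n./2)) : {set 'S_n} :=
  [set s | all (cl r s) js].

Lemma card_sum (T : finType) (B : {set T}) (P : pred T) :
  #|[set x in B | P x]| = (\sum_(x in B) P x)%N.
Proof.
rewrite -sum1_card big_mkcond [in RHS]big_mkcond /=; apply: eq_bigr => x _.
by rewrite !inE; case: (x \in B); case: (P x).
Qed.

Lemma fst_snd (n : nat) (j j' : 'I_(n./2)) : fstp j != sndp j'.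
Proof. by apply/eqP => /(congr1 val) /= /(congr1 odd); rewrite oddS !oddM. Qed.

Lemma snd_inj (n : nat) (j j' : 'I_(n./2)) : sndp j = sndp j' -> j = j'.
Proof. by move=> /(congr1 val) [] /eqP; rewrite eqn_pmul2l // => /eqP /val_inj. Qed.

Lemma swap_bound (R : realType) (n : nat) (r : R) (hr : 0 <= r) (js : seq 'I_(n./2))
  (j : 'I_(n./2)) : j \notin js ->
  (#|[set s in AA r js | cl r s j]| * (n - (2 * size js).+1) <= 2 * dd r * #|AA r js|)%N.
Proof.
move=> hj.
set p := sndp j; set a0 := fstp j.
pose W := a0 :: (map (@fstp n) js ++ map (@sndp n) js).
pose U := [set q | q \notin W].
have hU : (n - (2 * size js).+1 <= #|U|)%N.
  have h1 : (#|W| + #|U| = n)%N.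
    rewrite -[RHS]card_ord -(cardC (mem W)); congr addn.
    by apply: eq_card => q; rewrite !inE.
  have h2 : (#|W| <= size W)%N := card_size W.
  rewrite /= size_cat !size_map in h2.
  move: (#|W|) h1 h2 => w h1 h2.
  rewrite -[X in (X - _ <= _)%N]h1; lia.
have ha0U : a0 \notin U by rewrite inE negbK mem_head.
have pfix : forall q (x : 'I_n), q \in U -> x \in W -> x != p -> tperm p q x = x.
  move=> q x hq hx hxp; apply: tpermD; first by rewrite eq_sym.
  by apply/eqP => hqx; move: hq; rewrite inE hqx hx.
have key : forall (s : 'S_n) q, q \in U -> ((tperm p q * s)%g \in AA r js) = (s \in AA r js).
  move=> s q hq; rewrite !inE; apply: eq_in_all => j' hj'.
  have hf : fstp j' \in W by rewrite in_cons mem_cat map_f ?orbT.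
  have hs : sndp j' \in W by rewrite in_cons mem_cat map_f ?orbT.
  have hfp : fstp j' != p := fst_snd j' j.
  have hsp : sndp j' != p.
    by apply/eqP => /snd_inj hjj; move: hj; rewrite -hjj hj'.
  by rewrite /cl !permM (pfix q _ hq hf hfp) (pfix q _ hq hs hsp).
have key2 : forall (s : 'S_n) q, q \in U -> cl r ((tperm p q * s)%g) j = near r (s a0) (s q).
  move=> s q hq; rewrite /cl !permM tpermL pfix //; first by rewrite mem_head.
  exact: fst_snd.
apply: (@leq_trans (#|[set s in AA r js | cl r s j]| * #|U|)%N).
  by rewrite leq_mul2l hU orbT.
rewrite mulnC -sum_nat_const.
rewrite (eq_bigr (fun q => \sum_(s in AA r js) (cl r ((tperm p q * s)%g) j : nat))%N); last first.
  move=> q hq; rewrite -card_sum.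
  rewrite -(card_preimset _ (@mulgI _ (tperm p q))).
  by apply: eq_card => s; rewrite !inE; have := key s q hq; rewrite !inE => ->.
rewrite /= exchange_big /= mulnC -sum_nat_const.
apply: leq_sum => s _.
rewrite (eq_bigr (fun q => near r (s a0) (s q) : nat)); last by move=> q hq; rewrite key2.
rewrite -card_sum; exact: count_close.
Qed.
Definition PP (n L : nat) : nat := (\prod_(i < L) (n - (2 * i).+1))%N.

Lemma A_bound (R : realType) (n : nat) (r : R) (hr : 0 <= r) (js : seq 'I_(n./2)) :
  uniq js -> (#|AA r js| * PP n (size js) <= (2 * dd r) ^ (size js) * n`!)%N.
Proof.
elim: js => [|j js IH] /=.
  move=> _; rewrite /PP big_ord0 muln1 expn0 mul1n.
  have -> : AA r [::] = [set: 'S_n]%SET by apply/setP => s; rewrite !inE.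
  by rewrite cardsT card_Sn.
move=> /andP [hj hu].
have e : AA r (j :: js) = [set s in AA r js | cl r s j].
  by apply/setP => s; rewrite !inE andbC.
rewrite e /PP big_ord_recr /= -/(PP n (size js)) expnS.
have h1 := swap_bound hr hj.
have h2 := IH hu.
rewrite mulnA mulnAC.
apply: (leq_trans (leq_mul h1 (leqnn _))).
rewrite -mulnA -[X in (_ <= X)%N]mulnA leq_mul2l h2 orbT //.
Qed.

Lemma card_sumT (T : finType) (P : pred T) :
  #|[set x | P x]| = (\sum_x P x)%N.
Proof.
rewrite -sum1_card big_mkcond /=; apply: eq_bigr => x _.
by rewrite !inE; case: (P x).
Qed.

Lemma E_bound (R : realType) (n : nat) (r : R) (hr : 0 <= r) (k : nat) :
  (#|[set s : 'S_n | k <= #|[set j | cl r s j]|]| * PP n k <=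
     'C(n./2, k) * ((2 * dd r) ^ k * n`!))%N.
Proof.
set E := [set s : 'S_n | _].
set D := [set S : {set 'I_(n./2)} | #|S| == k].
have hS : forall S, S \in D -> (#|AA r (enum S)| * PP n k <= (2 * dd r) ^ k * n`!)%N.
  move=> S.

 rewrite /D !inE => /eqP hk.
  have := A_bound hr (enum_uniq (mem S)).
  by rewrite -cardE hk.
have hAS : forall (S : {set 'I_(n./2)}) (s : 'S_n), (s \in AA r (enum S)) = (S \subset [set j | cl r s j]).
  move=> S s; rewrite /AA !inE; apply/allP/fintype.subsetP => h j.
    by move=> hjS; rewrite !inE; apply: h; rewrite mem_enum.
  by rewrite mem_enum => /h; rewrite !inE.
have hcount : (#|E| <= \sum_(S in D) #|AA r (enum S)|)%N.
  rewrite -sum1_card.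
  apply: (@leq_trans (\sum_(s in E) #|[set S : {set 'I_(n./2)} | S \subset [set j | cl r s j] & #|S| == k]|)%N).
    apply: leq_sum => s; rewrite /E !inE => hs.
    by rewrite cards_draws bin_gt0.
  apply: (@leq_trans (\sum_s #|[set S : {set 'I_(n./2)} | S \subset [set j | cl r s j] & #|S| == k]|)%N).
    rewrite [X in (_ <= X)%N](bigID (mem E)) /=; exact: leq_addr.
  rewrite (eq_bigr (fun s => \sum_(S in D) (S \subset [set j | cl r s j]) : nat)%N); last first.
    by move=> s _; rewrite -card_sum; apply: eq_card => S; rewrite !inE andbC.
  rewrite exchange_big /=; apply: leq_sum => S _.
  by rewrite -card_sumT; apply: eq_leq; apply: eq_card => s; rewrite hAS !inE.
apply: (leq_trans (leq_mul hcount (leqnn (PP n k)))).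

rewrite big_distrl /=.
apply: (@leq_trans (\sum_(S in D) ((2 * dd r) ^ k * n`!))%N).
  by apply: leq_sum => S hSD; apply: hS.
by rewrite sum_nat_const /D card_draws card_ord.
Qed.
Lemma main_nat (R : realType) (n : nat) (r : R) (hr : 0 <= r) (k : nat) :
  (12 * dd r <= k)%N ->
  (#|[set s : 'S_n | k <= #|[set j | cl r s j]|]| * 2 ^ k <= n`!)%N.
Proof.
move=> hd.
set E := [set s : 'S_n | _].
set m := n./2.
have hm2 : (2 * m <= n)%N.
  by rewrite mul2n -geq_half_double.
case: (leqP k m) => hkm; last first.
  suff -> : #|E| = 0%N by [].
  apply/eqP; rewrite cards_eq0; apply/eqP/setP => s; rewrite !inE.
  apply/negbTE; rewrite -ltnNge.
  by apply: (leq_ltn_trans (max_card _)); rewrite card_ord.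
have hE := E_bound n hr k.
have hP0 : (0 < PP n k)%N.
  rewrite /PP prodn_gt0 // => i.
  have := ltn_ord i; lia.
have hCP : ('C(m, k) * k`! <= PP n k)%N.
  rewrite bin_ffact ffact_prod /PP.
  apply: leq_prod => i _.
  have := ltn_ord i; lia.
have h1 : (#|E| * k`! <= (2 * dd r) ^ k * n`!)%N.
  rewrite -(leq_pmul2r hP0) mulnAC.
  apply: (leq_trans (leq_mul hE (leqnn (k`!)))).
  by rewrite mulnAC mulnC leq_mul2l hCP orbT.
have h2 := final_nat R hd.
case: (posnP ((2 * dd r) ^ k)) => hz.
  move: h1; rewrite hz mul0n leqn0 muln_eq0 (negbTE (lt0n_neq0 (fact_gt0 k))) orbF.
  by move=> /eqP ->.
rewrite -(leq_pmul2r hz) -mulnA (mulnC (n`!)).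
apply: (leq_trans _ h1).
by rewrite leq_mul2l h2 orbT.
Qed.

Unset Implicit Arguments.
Theorem claim3p12 (R : realType) (n : nat) (r : R) (hr : 1 <= r) :
  close_prob n r <= powR 2 (- r).
Proof.
have hr0 : 0 <= r by apply: le_trans hr; exact: ler01.
have hc0 : (0 <= Num.ceil r)%R by rewrite real_ceil_ge0 ?num_real //; lra.
set k := `|Num.ceil r|%N.
have hkz : Num.ceil r = k%:Z by rewrite gez0_abs.
have hrk : r <= k%:R.
  have := real_ceil_ge (num_real r); rewrite hkz //.
have hdk : (12 * dd r <= k)%N.
  rewrite -(ler_nat R) natrM.
  have hd : ((dd r)%:R : R) <= r / 12%:R by rewrite truncn_le divr_ge0.
  apply: le_trans hrk.
  have h12 : (0 : R) < 12%:R by [].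
  by rewrite mulrC -ler_pdivlMr.
have hev : forall s : 'S_n, r <= (close_pairs s r)%:R -> (k <= #|[set j | cl r s j]|)%N.
  move=> s; rewrite close_pairsE => h.
  have : (Num.ceil r <= (#|[set j | cl r s j]|)%:Z)%R.
    by rewrite real_ceil_le_int ?num_real.
  by rewrite hkz lez_nat.
have hmain := main_nat n hr0 hdk.
have hsub : (#|[pred s : 'S_n | (r <= (close_pairs s r)%:R)%R]| <=
             #|[set s : 'S_n | k <= #|[set j | cl r s j]|]|)%N.
  apply: subset_leq_card; apply/fintype.subsetP => s; rewrite !inE; exact: hev.
have hfact : (0 : R) < (n`!)%:R by rewrite ltr0n fact_gt0.
apply: (@le_trans _ _ (2 ^- k)).
  rewrite /close_prob card_Sn ler_pdivrMr // mulrC ler_pdivlMr ?exprn_gt0 //.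
  rewrite -natrX -natrM ler_nat.
  apply: leq_trans hmain; by rewrite leq_mul2r hsub orbT.
rewrite -powR_invn //.
apply: ler_powR; first by lra.
by rewrite lerN2.
Qed.
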